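(* Let $0<a<b$ and let $\mu$ be the positive measure on $[0,+\infty[$ defined by $\int f\,d\mu=\frac1{2\pi}\int_a^b f(t)\sqrt{(t-a)(b-t)}\,\frac{dt}t$. Then $$\frac1{2\pi}\int_a^b\sqrt{(t-a)(b-t)}\frac{dt}t=\frac14(\sqrt b-\sqrt a)^2,\qquad \lim_{x\to+\infty}\Big(U^\mu(x)+\frac14(\sqrt b-\sqrt a)^2\log x\Big)=0,$$ and for all $x\ge b$, $$U^\mu(x)=-\frac12\big(x-\sqrt{ab}\log x\big)+C_\mu+\frac12\int_b^x\sqrt{(t-a)(t-b)}\frac{dt}t,$$ where $C_\mu=\frac14(a+b)\Big(1-\log\frac{b-a}4\Big)-\frac{\sqrt{ab}}2\log\frac{\sqrt b+\sqrt a}{\sqrt b-\sqrt a}$.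
   Context: $U^\mu(x)=\int\log\frac1{|x-t|}\,\mu(dt)$ denotes the logarithmic potential of $\mu$. *)

(* Defs.v *)
From Stdlib Require Import Reals.
From Coquelicot Require Import Coquelicot.
Open Scope R_scope.

Definition mu_density (a b t : R) : R :=
  / (2 * PI) * (sqrt ((t - a) * (b - t)) / t).

Definition U_mu (a b x : R) : R :=
  RInt (fun t => ln (/ Rabs (x - t)) * mu_density a b t) a b.

Definition C_mu (a b : R) : R :=
  / 4 * (a + b) * (1 - ln ((b - a) / 4))
  - sqrt (a * b) / 2 * ln ((sqrt b + sqrt a) / (sqrt b - sqrt a)).

(* Main.v *)
Require Import Defs.
From Stdlib Require Import Reals Lra Lia Psatz.
From Coquelicot Require Import Coquelicot.
Open Scope R_scope.

Lemma cR_mult (f g : R -> R) x : continuous f x -> continuous g x -> continuous (fun y => f y * g y) x.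
Proof. intros; apply (continuous_mult (K:=R_AbsRing) f g x); auto. Qed.
Lemma cR_plus (f g : R -> R) x : continuous f x -> continuous g x -> continuous (fun y => f y + g y) x.
Proof. intros; apply (continuous_plus (K:=R_AbsRing) (V:=R_NormedModule) f g x); auto. Qed.
Lemma cR_minus (f g : R -> R) x : continuous f x -> continuous g x -> continuous (fun y => f y - g y) x.
Proof. intros; apply (continuous_minus (K:=R_AbsRing) (V:=R_NormedModule) f g x); auto. Qed.
Lemma cR_opp (f : R -> R) x : continuous f x -> continuous (fun y => - f y) x.
Proof. intros; apply (continuous_opp (K:=R_AbsRing) (V:=R_NormedModule) f x); auto. Qed.
Lemma cR_inv (f : R -> R) x : continuous f x -> f x <> 0 -> continuous (fun y => / f y) x.
Proof. intros; apply continuous_Rinv_comp; auto. Qed.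
Lemma cR_div (f g : R -> R) x : continuous f x -> continuous g x -> g x <> 0 -> continuous (fun y => f y / g y) x.
Proof. intros; unfold Rdiv; apply cR_mult; auto; apply cR_inv; auto. Qed.
Lemma cR_sqrt (f : R -> R) x : continuous f x -> continuous (fun y => sqrt (f y)) x.
Proof. intros; apply continuous_sqrt_comp; auto. Qed.
Lemma cR_ln (f : R -> R) x : continuous f x -> 0 < f x -> continuous (fun y => ln (f y)) x.
Proof. intros. apply (continuous_comp f ln); auto. apply continuous_ln; auto. Qed.
Lemma cR_const (c x : R) : continuous (fun _ : R => c) x.
Proof. apply continuous_const. Qed.
Lemma cR_id (x : R) : continuous (fun y : R => y) x.
Proof. apply continuous_id. Qed.

Lemma cR_abs (f : R -> R) x : continuous f x -> continuous (fun y => Rabs (f y)) x.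
Proof. intros; apply continuous_Rabs_comp; auto. Qed.

Ltac cont1 := match goal with
 | |- continuous (fun y => Rabs (@?f y)) _ => apply (cR_abs f)
 | |- continuous (fun _ => ?c) _ => apply cR_const
 | |- continuous (fun y => y) _ => apply cR_id
 | |- continuous (fun y => @?f y + @?g y) _ => apply (cR_plus f g)
 | |- continuous (fun y => @?f y - @?g y) _ => apply (cR_minus f g)
 | |- continuous (fun y => @?f y * @?g y) _ => apply (cR_mult f g)
 | |- continuous (fun y => @?f y / @?g y) _ => apply (cR_div f g)
 | |- continuous (fun y => - @?f y) _ => apply (cR_opp f)
 | |- continuous (fun y => / @?f y) _ => apply (cR_inv f)
 | |- continuous (fun y => sqrt (@?f y)) _ => apply (cR_sqrt f)
 | |- continuous (fun y => ln (@?f y)) _ => apply (cR_ln f)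
 end.
Ltac cont := repeat cont1.

Lemma cont_mu (a b t : R) : 0 < t -> continuous (mu_density a b) t.
Proof. intros. unfold mu_density. cont. all: try lra. Qed.

Lemma D_pos (e c : R) : -1 < e < 1 -> -1 <= c <= 1 -> 0 < 1 + e^2 + 2*e*c.
Proof. intros He Hc.
  assert (1 + e^2 + 2*e*c = ((1+c)*(1+e)^2 + (1-c)*(1-e)^2)/2) by field.
  rewrite H.
  assert (0 < (1+e)^2) by nra. assert (0 < (1-e)^2) by nra.
  destruct (Rle_lt_dec 0 c).
  - assert (0 <= (1-c)*(1-e)^2) by nra. assert ((1+e)^2 <= (1+c)*(1+e)^2) by nra. lra.
  - assert (0 <= (1+c)*(1+e)^2) by nra. assert ((1-e)^2 <= (1-c)*(1-e)^2) by nra. lra. Qed.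
Lemma Den_pos (e c : R) : -1 < e < 1 -> -1 <= c <= 1 -> 0 < 1 + e*c.
Proof. intros He Hc. destruct (Rle_lt_dec 0 c).
 - assert (0 <= (1+e)*c) by nra. nra.
 - assert (0 <= (1-e)*(-c)) by nra. nra. Qed.

Lemma atan_part_derive (e x : R) : -1 < e < 1 ->
  is_derive (fun t => atan (e * sin t / (1 + e * cos t))) x
    (e * (cos x + e) / (1 + e^2 + 2*e*cos x)).
Proof.
  intros He.
  pose proof (COS_bound x) as Hc.
  pose proof (Den_pos e (cos x) He Hc) as H1.
  pose proof (D_pos e (cos x) He Hc) as H2.
  pose proof (sin2_cos2 x) as Hsc. unfold Rsqr in Hsc.
  auto_derive. { lra. }
  set (S := sin x) in *. set (C := cos x) in *.
  assert (HS : S * S = 1 - C * C) by lra.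
  field_simplify.
  - replace (S ^ 2) with (1 - C ^ 2) by nra. field. intro; nra.
  - intro; nra.
  - split; intro; nra.
Qed.

Definition Pprim (e t : R) : R :=
  - (1 - e^2) / (4 * e^2) * (t - 2 * atan (e * sin t / (1 + e * cos t)))
  + ((1 + e^2) * t - 2 * e * sin t) / (4 * e^2).

Lemma poisson (e : R) : -1 < e < 1 -> e <> 0 ->
  is_RInt (fun t => sin t ^ 2 / (1 + e^2 + 2*e*cos t)) 0 PI (PI/2).
Proof.
  intros He He0.
  assert (He2 : 0 < e * e) by (apply (Rsqr_pos_lt e He0)).
  assert (Hr : is_RInt (fun t => sin t ^ 2 / (1 + e^2 + 2*e*cos t)) 0 PI (minus (Pprim e PI) (Pprim e 0))).
  { apply (is_RInt_derive (Pprim e)).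
  - intros x _. unfold Pprim.
    pose proof (COS_bound x) as Hc.
    pose proof (Den_pos e (cos x) He Hc) as H1.
    pose proof (D_pos e (cos x) He Hc) as H2.
    pose proof (sin2_cos2 x) as Hsc. unfold Rsqr in Hsc.
    auto_derive. { lra. }
    set (S := sin x) in *. set (C := cos x) in *.
    field_simplify.
    + replace (S ^ 2) with (1 - C ^ 2) by nra. field. repeat split; intro; nra.
    + intro; nra.
    + repeat split; intro; nra.
  - intros x _.
    pose proof (COS_bound x) as Hc.
    pose proof (D_pos e (cos x) He Hc) as H2.
    apply (ex_derive_continuous (fun t => sin t ^ 2 / (1 + e^2 + 2*e*cos t))).
    auto_derive. lra. }
  replace (PI/2) with (minus (Pprim e PI) (Pprim e 0)). exact Hr.
  unfold Pprim, minus, plus, opp; simpl. rewrite sin_PI, sin_0, cos_PI, cos_0.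
      replace (e * 0 / (1 + e * -1)) with 0 by (field; intro; nra).
      replace (e * 0 / (1 + e * 1)) with 0 by (field; intro; nra).
      rewrite atan_0. field. intro; nra.
Qed.

Lemma subst_ab (a b : R) (f : R -> R) : a < b ->
  (forall t, a <= t <= b -> continuous f t) ->
  RInt f a b = RInt (fun th => (b-a)/2 * sin th * f ((a+b)/2 - (b-a)/2 * cos th)) 0 PI.
Proof.
  intros Hab Hf.
  rewrite (RInt_comp f (fun th => (a+b)/2 - (b-a)/2 * cos th) (fun th => (b-a)/2 * sin th)).
  - rewrite cos_0, cos_PI. f_equal; field.
  - intros x _. apply Hf. pose proof (COS_bound x). nra.
  - intros x _. split.
    + auto_derive; auto. ring.
    + apply (ex_derive_continuous (fun th => (b-a)/2 * sin th)). auto_derive. auto.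
Qed.

Lemma sqrt_semi (a b th : R) : a < b -> 0 <= th <= PI ->
  sqrt (((a+b)/2 - (b-a)/2 * cos th - a) * (b - ((a+b)/2 - (b-a)/2 * cos th)))
  = (b-a)/2 * sin th.
Proof.
  intros Hab Hth.
  pose proof (sin_ge_0 th (proj1 Hth) (proj2 Hth)).
  pose proof (sin2_cos2 th) as Hsc. unfold Rsqr in Hsc.
  assert (E: sin th ^ 2 = 1 - cos th ^ 2) by (simpl; lra).
  assert (E2 : ((a+b)/2 - (b-a)/2 * cos th - a) * (b - ((a+b)/2 - (b-a)/2 * cos th))
     = ((b-a)/2 * sin th) ^ 2).
  { rewrite Rpow_mult_distr, E. field. }
  rewrite E2. apply sqrt_pow2. apply Rmult_le_pos; lra.
Qed.

Lemma pois_scaled (e K L : R) : -1 < e < 1 -> e <> 0 -> L <> 0 ->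
  is_RInt (fun th => K * (sin th ^ 2 / (L * (1 + e^2 + 2*e*cos th)))) 0 PI (K / L * (PI/2)).
Proof.
  intros He He0 HL.
  apply is_RInt_ext with (fun th => scal (K/L) (sin th ^ 2 / (1 + e^2 + 2*e*cos th))).
  - intros x _. unfold scal; simpl; unfold mult; simpl.
    pose proof (D_pos e (cos x) He (COS_bound x)). field. split; lra.
  - apply (is_RInt_scal (V:=R_NormedModule)). apply poisson; auto.
Qed.

Lemma sqrt_facts (a b : R) : 0 < a -> a < b ->
  0 < sqrt a /\ sqrt a < sqrt b /\ sqrt a * sqrt a = a /\ sqrt b * sqrt b = b.
Proof.
  intros ha hab. repeat split.
  - apply sqrt_lt_R0; auto.
  - apply sqrt_lt_1; lra.
  - apply sqrt_sqrt; lra.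
  - apply sqrt_sqrt; lra.
Qed.

Lemma pi_pos' : 0 < PI. Proof. exact PI_RGT_0. Qed.

Lemma mass (a b : R) : 0 < a -> a < b ->
  RInt (mu_density a b) a b = / 4 * (sqrt b - sqrt a) ^ 2.
Proof.
  intros ha hab.
  rewrite (subst_ab a b (mu_density a b) hab).
  2:{ intros t Ht. apply cont_mu. lra. }
  destruct (sqrt_facts a b ha hab) as (Hs & HsS & Ea & Eb).
  set (s := sqrt a) in *. set (S := sqrt b) in *. clearbody s S. subst a b.
  pose proof pi_pos'.
  apply is_RInt_unique.
  replace (/ 4 * (S - s) ^ 2) with
    ((/ (2*PI) * ((S*S - s*s)/2)^2) / ((S+s)^2/4) * (PI/2)) by (field; lra).
  eapply is_RInt_ext; [| apply (pois_scaled ((s - S)/(S+s)))].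
  - intros th Hth. match goal with |- ?x = ?y => change (@eq R x y) end.
    rewrite Rmin_left in Hth by lra. rewrite Rmax_right in Hth by lra.
    unfold mu_density. rewrite sqrt_semi by lra.
    replace ((s * s + S * S) / 2 - (S * S - s * s) / 2 * cos th) with
      ((S+s)^2/4 * (1 + ((s - S)/(S+s))^2 + 2 * ((s - S)/(S+s)) * cos th)) by (field; lra).
    assert (0 < 1 + ((s - S)/(S+s))^2 + 2 * ((s - S)/(S+s)) * cos th).
    { apply D_pos. 2: apply COS_bound. split.
      - apply Rlt_div_r; lra. - apply Rlt_div_l; lra. }
    field. split; [lra|].
    assert (Hp: (S + s) ^ 2 + (s - S) ^ 2 + 2 * (s - S) * cos th * (S + s) =
       (S+s)^2 * (1 + ((s - S) / (S + s)) ^ 2 + 2 * ((s - S) / (S + s)) * cos th)) by (field; lra).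
    rewrite Hp. assert (0 < (S+s)^2) by nra.
    assert (0 < (S+s)^2 * (1 + ((s - S) / (S + s)) ^ 2 + 2 * ((s - S) / (S + s)) * cos th)) by (apply Rmult_lt_0_compat; auto).
    lra.
  - split. apply Rlt_div_r; lra. apply Rlt_div_l; lra.
  - intro. assert ((s - S) = 0). { apply (Rmult_eq_reg_r (/(S+s))). rewrite Rmult_0_l. exact H0.
      apply Rinv_neq_0_compat; lra. } lra.
  - intro; nra.
Qed.

Lemma stieltjes (a b x : R) : 0 < a -> a < b -> b < x ->
  RInt (fun t => - / (x - t) * mu_density a b t) a b
  = - (x - sqrt (a * b) - sqrt ((x - a) * (x - b))) / (2 * x).
Proof.
  intros ha hab hbx.
  rewrite (subst_ab a b _ hab).
  2:{ intros t Ht. cont; try lra. all: try (apply cont_mu); lra. }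
  rewrite sqrt_mult by lra. rewrite (sqrt_mult (x-a)) by lra.
  destruct (sqrt_facts a b ha hab) as (Hs & HsS & Ea & Eb).
  destruct (sqrt_facts (x-b) (x-a) ltac:(lra) ltac:(lra)) as (Hv & Hvu & Ev & Eu).
  set (s := sqrt a) in *. set (S := sqrt b) in *.
  set (u := sqrt (x - a)) in *. set (v := sqrt (x - b)) in *.
  clearbody s S u v. subst a b.
  pose proof pi_pos'.
  apply is_RInt_unique.
  set (K := - / (2 * PI * x) * ((S*S - s*s)/2)^2).
  set (e := (s - S)/(S+s)). set (L1 := (S+s)^2/4).
  set (d := (u - v)/(u+v)). set (L2 := (u+v)^2/4).
  assert (He : -1 < e < 1) by (unfold e; split; [apply Rlt_div_r|apply Rlt_div_l]; lra).
  assert (Hd : -1 < d < 1) by (unfold d; split; [apply Rlt_div_r|apply Rlt_div_l]; lra).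
  assert (He0 : e <> 0).
  { unfold e. intro H0. assert ((s - S) = 0). { apply (Rmult_eq_reg_r (/(S+s))). rewrite Rmult_0_l. exact H0.
      apply Rinv_neq_0_compat; lra. } lra. }
  assert (Hd0 : d <> 0).
  { unfold d. intro H0. assert ((u - v) = 0). { apply (Rmult_eq_reg_r (/(u+v))). rewrite Rmult_0_l. exact H0.
      apply Rinv_neq_0_compat; lra. } lra. }
  assert (HL1 : 0 < L1) by (unfold L1; nra).
  assert (HL2 : 0 < L2) by (unfold L2; nra).
  replace (- (x - s * S - u * v) / (2 * x)) with (K / L1 * (PI/2) + K / L2 * (PI/2)).
  2:{ assert (E1 : K / L1 * (PI/2) = - (S - s)^2 / (4 * x)).
      { unfold K, L1. field; lra. }
      assert (E2 : K / L2 * (PI/2) = - (u - v)^2 / (4 * x)).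
      { unfold K, L2. replace (S * S - s * s) with (u * u - v * v) by lra. field; lra. }
      rewrite E1, E2.
      replace (- (x - s * S - u * v)) with (- ((S - s)^2 + (u - v)^2) / 2) by lra.
      field. lra. }
  apply (is_RInt_ext (fun th => plus (K * (sin th ^ 2 / (L1 * (1 + e^2 + 2*e*cos th))))
                                     (K * (sin th ^ 2 / (L2 * (1 + d^2 + 2*d*cos th)))))).
  2:{ apply (is_RInt_plus (V:=R_NormedModule)); apply pois_scaled; auto; lra. }
  intros th Hth. match goal with |- ?x = ?y => change (@eq R x y) end.
  rewrite Rmin_left in Hth by lra. rewrite Rmax_right in Hth by lra.
  unfold mu_density. rewrite sqrt_semi by lra.
  assert (G1 : (s * s + S * S) / 2 - (S * S - s * s) / 2 * cos th = L1 * (1 + e^2 + 2*e*cos th))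
    by (unfold L1, e; field; lra).
  assert (G2 : x - ((s * s + S * S) / 2 - (S * S - s * s) / 2 * cos th) = L2 * (1 + d^2 + 2*d*cos th)).
  { transitivity ((u*u+v*v)/2 + (u*u - v*v)/2 * cos th). 
    - rewrite Eu, Ev. field.
    - unfold L2, d. field. lra. }
  rewrite G2, G1.
  pose proof (D_pos e (cos th) He (COS_bound th)).
  pose proof (D_pos d (cos th) Hd (COS_bound th)).
  assert (Hx : x = L1 * (1 + e^2 + 2*e*cos th) + L2 * (1 + d^2 + 2*d*cos th)) by lra.
  set (D1 := 1 + e^2 + 2*e*cos th) in *. set (D2 := 1 + d^2 + 2*d*cos th) in *.
  clearbody D1 D2.
  unfold plus; simpl.
  unfold K. rewrite Hx. field.
  repeat split; try lra; try (intro; nra).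
Qed.

Lemma ball_R (s eps z : R) : ball s eps z -> s - eps < z < s + eps.
Proof.
  intros Hz. change (Rabs (z - s) < eps) in Hz. apply Rabs_def2 in Hz. lra.
Qed.

Lemma loc_ex (f : R -> R) (u v d s : R) : u <= v -> 0 < d ->
  (forall t, u - d < t < v + d -> continuous f t) -> u - d < s < v + d ->
  locally s (fun z => is_RInt f u z (RInt f u z)).
Proof.
  intros Huv Hd Hf Hs.
  assert (He : 0 < Rmin (s - (u - d)) (v + d - s)) by (apply Rmin_glb_lt; lra).
  exists (mkposreal _ He). intros z Hz. apply ball_R in Hz. simpl in Hz.
  pose proof (Rmin_l (s - (u - d)) (v + d - s)). pose proof (Rmin_r (s - (u - d)) (v + d - s)).
  apply (RInt_correct (V:=R_CompleteNormedModule)). apply ex_RInt_continuous.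
  intros t Ht. apply Hf.
  destruct (Rle_dec u z).
  - rewrite Rmin_left in Ht by auto. rewrite Rmax_right in Ht by auto. lra.
  - rewrite Rmin_right in Ht by lra. rewrite Rmax_left in Ht by lra. lra.
Qed.

Lemma ftc_end (F f : R -> R) (u v d : R) : u < v -> 0 < d ->
  (forall t, u - d < t < v + d -> continuous f t) ->
  (forall t, u <= t <= v -> continuity_pt F t) ->
  (forall t, u < t < v -> is_derive F t (f t)) ->
  RInt f u v = F v - F u.
Proof.
  intros Huv Hd Hf HF HFd.
  destruct (MVT_gen (fun s => RInt f u s - F s) u v (fun _ => 0)) as [c [_ Hc]].
  - intros s Hs. rewrite Rmin_left in Hs by lra. rewrite Rmax_right in Hs by lra.
    assert (H1 : is_derive (fun z => RInt f u z) s (f s)).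
    { apply (is_derive_RInt f (fun z => RInt f u z) u s).
      - apply (loc_ex f u v d s); auto; lra.
      - apply Hf; lra. }
    pose proof (is_derive_minus (fun z => RInt f u z) F s (f s) (f s) H1 (HFd s Hs)) as H2.
    replace 0 with (minus (f s) (f s)). exact H2.
    unfold minus, plus, opp; simpl. ring.
  - intros s Hs. rewrite Rmin_left in Hs by lra. rewrite Rmax_right in Hs by lra.
    apply continuity_pt_minus; [| apply HF; auto].
    apply continuity_pt_filterlim.
    apply (continuous_RInt_1 f u s (fun z => RInt f u z)).
    apply (loc_ex f u v d s); auto; lra.
  - rewrite RInt_point in Hc. unfold zero in Hc; simpl in Hc. lra.
Qed.
Lemma div_eq (x y z u : R) : y <> 0 -> u <> 0 -> x * u = z * y -> x / y = z / u.
Proof. intros Hy Hu H. assert (Hx: x = z * y / u). { apply (Rmult_eq_reg_r u); auto. rewrite H. field. auto. } subst x. field. split; auto. Qed.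

Ltac fixm := repeat match goal with |- context [?x + - ?y] => change (x + - y) with (x - y) end.

Definition Fprim (a b t : R) : R :=
  sqrt ((t - a) * (t - b)) - (a + b) / 2 * ln (t - (a + b) / 2 + sqrt ((t - a) * (t - b)))
  - sqrt (a * b) * ln (((a + b) / 2 * t - a * b - sqrt (a * b) * sqrt ((t - a) * (t - b))) / t).

Lemma N_pos (a b t : R) : 0 < a -> a < b -> b <= t ->
  0 < (a + b) / 2 * t - a * b - sqrt (a * b) * sqrt ((t - a) * (t - b)).
Proof.
  intros ha hab hbt.
  set (w := sqrt ((t - a) * (t - b))). set (p := sqrt (a * b)).
  assert (Ew : w * w = (t - a) * (t - b)) by (apply sqrt_sqrt; nra).
  assert (Ep : p * p = a * b) by (apply sqrt_sqrt; nra).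
  assert (Hw : 0 <= w) by apply sqrt_pos. assert (Hp : 0 <= p) by apply sqrt_pos.
  assert (H1 : 0 < (a + b) / 2 * t - a * b) by nra.
  assert (H2 : ((a + b) / 2 * t - a * b)^2 - (p*w)^2 = t^2 * ((b-a)/2)^2).
  { replace ((p*w)^2) with ((p*p)*(w*w)) by ring. rewrite Ep, Ew. field. }
  assert (H3 : 0 < t^2 * ((b-a)/2)^2).
  { apply Rmult_lt_0_compat; apply pow_lt; lra. }
  assert (H4 : 0 <= p * w) by (apply Rmult_le_pos; auto).
  nra.
Qed.

Lemma dA (a b t : R) : 0 < a -> a < b -> b < t ->
  is_derive (fun t => sqrt ((t - a) * (t - b))) t ((t - (a+b)/2) / sqrt ((t - a) * (t - b))).
Proof.
  intros ha hab hbt. assert (0 < (t-a)*(t-b)) by nra.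
  assert (0 < sqrt ((t - a) * (t - b))) by (apply sqrt_lt_R0; auto).
  auto_derive; fixm. auto. field. lra.
Qed.

Lemma dB (a b t : R) : 0 < a -> a < b -> b < t ->
  is_derive (fun t => ln (t - (a+b)/2 + sqrt ((t - a) * (t - b)))) t (/ sqrt ((t - a) * (t - b))).
Proof.
  intros ha hab hbt. assert (0 < (t-a)*(t-b)) by nra.
  assert (0 < sqrt ((t - a) * (t - b))) by (apply sqrt_lt_R0; auto).
  auto_derive; fixm. repeat split; auto; lra.
  field. split; lra.
Qed.

Lemma dC (a b t : R) : 0 < a -> a < b -> b < t ->
  is_derive (fun t => ln (((a + b) / 2 * t - a * b - sqrt (a * b) * sqrt ((t - a) * (t - b))) / t)) t
    (- sqrt (a * b) / (t * sqrt ((t - a) * (t - b)))).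
Proof.
  intros ha hab hbt. assert (0 < (t-a)*(t-b)) by nra.
  pose proof (N_pos a b t ha hab ltac:(lra)) as HN.
  assert (Hw : 0 < sqrt ((t - a) * (t - b))) by (apply sqrt_lt_R0; auto).
  auto_derive; fixm.
  { repeat split; auto; try lra. apply Rdiv_lt_0_compat; lra. }
  assert (Ew : sqrt ((t - a) * (t - b)) * sqrt ((t - a) * (t - b)) = (t - a) * (t - b)) by (apply sqrt_sqrt; nra).
  assert (Ep : sqrt (a * b) * sqrt (a * b) = a * b) by (apply sqrt_sqrt; nra).
  set (w := sqrt ((t - a) * (t - b))) in *. set (p := sqrt (a * b)) in *.
  clearbody w p.
  field_simplify; try (repeat split; lra).
  apply div_eq.
  - replace (-2 * a * b * t * w + a * t ^ 2 * w + b * t ^ 2 * w - 2 * p * t * w ^ 2) with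
      (2 * t * w * ((a + b) / 2 * t - a * b - p * w)) by field.
    apply Rmult_integral_contrapositive_currified; [|lra].
    apply Rmult_integral_contrapositive_currified; lra.
  - apply Rmult_integral_contrapositive_currified; lra.
  - assert (H1 : (p*t*w)*(w*w) = (p*t*w)*((t-a)*(t-b))) by (rewrite Ew; ring).
    assert (H2 : (t*w*w)*(p*p) = (t*w*w)*(a*b)) by (rewrite Ep; ring).
    lra.
Qed.

Lemma dF (a b t : R) : 0 < a -> a < b -> b < t ->
  is_derive (Fprim a b) t (sqrt ((t - a) * (t - b)) / t).
Proof.
  intros ha hab hbt.
  pose proof (is_derive_minus _ _ t _ _
     (is_derive_minus _ _ t _ _ (dA a b t ha hab hbt) (is_derive_scal _ t ((a+b)/2) _ (dB a b t ha hab hbt)))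
     (is_derive_scal _ t (sqrt (a*b)) _ (dC a b t ha hab hbt))) as HF.
  replace (sqrt ((t - a) * (t - b)) / t) with
    (minus (minus ((t - (a+b)/2) / sqrt ((t - a) * (t - b))) (scal ((a+b)/2) (/ sqrt ((t - a) * (t - b)))))
       (scal (sqrt (a*b)) (- sqrt (a * b) / (t * sqrt ((t - a) * (t - b)))))).
  { exact HF. }
  unfold minus, plus, opp, scal; simpl; unfold mult; simpl.
  assert (0 < (t-a)*(t-b)) by nra.
  assert (Hw : 0 < sqrt ((t - a) * (t - b))) by (apply sqrt_lt_R0; auto).
  assert (Ew : sqrt ((t - a) * (t - b)) * sqrt ((t - a) * (t - b)) = (t - a) * (t - b)) by (apply sqrt_sqrt; nra).
  assert (Ep : sqrt (a * b) * sqrt (a * b) = a * b) by (apply sqrt_sqrt; nra).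
  set (w := sqrt ((t - a) * (t - b))) in *. set (p := sqrt (a * b)) in *.
  clearbody w p.
  field_simplify; try lra.
  apply div_eq; try (apply Rmult_integral_contrapositive_currified; lra); try lra.
  replace (p ^ 2) with (p * p) by ring. rewrite Ep.
  replace (w * (2 * t * w)) with (2 * t * (w * w)) by ring. rewrite Ew. ring.
Qed.

Lemma J_closed (a b x : R) : 0 < a -> a < b -> b <= x ->
  RInt (fun t => sqrt ((t - a) * (t - b)) / t) b x = Fprim a b x - Fprim a b b.
Proof.
  intros ha hab hbx.
  destruct (Req_dec b x) as [<-|Hne].
  { rewrite RInt_point. unfold zero; simpl. ring. }
  apply (ftc_end (Fprim a b) _ b x (b/2)); try lra.
  - intros t Ht. cont; lra.
  - intros t Ht. apply continuity_pt_filterlim. change (continuous (Fprim a b) t). unfold Fprim. cont.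
    all: try lra.
    + pose proof (sqrt_pos ((t - a) * (t - b))). lra.
    + apply Rdiv_lt_0_compat; [apply N_pos|]; lra.
  - intros t Ht. apply dF; lra.
Qed.
Lemma dlog (u t K : R) : t < u -> is_derive (fun z => ln (/ Rabs (z - t)) * K) u (- / (u - t) * K).
Proof. intros H. auto_derive; fixm; rewrite Rabs_pos_eq by lra.
  - repeat split; try lra. apply Rinv_0_lt_compat; lra.
  - rewrite sign_eq_1 by lra. field. lra.
Qed.

Lemma U_deriv (a b x : R) : 0 < a -> a < b -> b < x ->
  is_derive (U_mu a b) x (- (x - sqrt (a * b) - sqrt ((x - a) * (x - b))) / (2 * x)).
Proof.
  intros ha hab hbx.
  unfold U_mu.
  rewrite <- (stieltjes a b x ha hab hbx).
  assert (Hdel : 0 < (x - b) / 2) by lra.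
  set (del := mkposreal _ Hdel).
  assert (HD : forall u v, v < u -> Derive (fun z => ln (/ Rabs (z - v)) * mu_density a b v) u
                             = - / (u - v) * mu_density a b v).
  { intros u v Huv. apply is_derive_unique. apply dlog; auto. }
  replace (RInt (fun t => - / (x - t) * mu_density a b t) a b) with
     (RInt (fun t => Derive (fun u => ln (/ Rabs (u - t)) * mu_density a b t) x) a b).
  2:{ apply RInt_ext. intros t Ht. rewrite Rmin_left in Ht by lra. rewrite Rmax_right in Ht by lra.
      apply HD. lra. }
  apply (is_derive_RInt_param (fun u t => ln (/ Rabs (u - t)) * mu_density a b t)).
  - exists del. intros y Hy t Ht. apply ball_R in Hy. simpl in Hy.
    rewrite Rmin_left in Ht by lra. rewrite Rmax_right in Ht by lra.
    eexists. apply dlog. lra.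
  - intros t Ht. rewrite Rmin_left in Ht by lra. rewrite Rmax_right in Ht by lra.
    apply continuity_2d_pt_ext_loc with (fun u v => - / (u - v) * mu_density a b v).
    + exists del. intros u v Hu Hv. simpl in Hu, Hv.
      apply Rabs_def2 in Hu. apply Rabs_def2 in Hv. rewrite HD; auto. lra.
    + apply continuity_2d_pt_mult.
      * apply continuity_2d_pt_opp. apply continuity_2d_pt_inv.
        apply continuity_2d_pt_minus. apply continuity_2d_pt_id1. apply continuity_2d_pt_id2.
        lra.
      * apply (continuity_1d_2d_pt_comp (mu_density a b) (fun u v => v)).
        apply continuity_pt_filterlim. apply cont_mu. lra.
        apply continuity_2d_pt_id2.
  - exists del. intros y Hy. apply ball_R in Hy. simpl in Hy.
    apply (ex_RInt_continuous (V:=R_CompleteNormedModule)). intros t Ht.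
    rewrite Rmin_left in Ht by lra. rewrite Rmax_right in Ht by lra.
    apply (cR_mult (fun t => ln (/ Rabs (y - t))) (mu_density a b)).
    + cont; rewrite Rabs_pos_eq by lra; try lra. apply Rinv_0_lt_compat; lra.
    + apply cont_mu. lra.
Qed.

Definition RHS (a b x : R) : R :=
  - / 2 * (x - sqrt (a * b) * ln x) + C_mu a b
  + / 2 * RInt (fun t => sqrt ((t - a) * (t - b)) / t) b x.

Lemma J_deriv (a b x : R) : 0 < a -> a < b -> b < x ->
  is_derive (fun y => RInt (fun t => sqrt ((t - a) * (t - b)) / t) b y) x
    (sqrt ((x - a) * (x - b)) / x).
Proof.
  intros ha hab hbx.
  apply (is_derive_RInt (fun t => sqrt ((t - a) * (t - b)) / t)
         (fun y => RInt (fun t => sqrt ((t - a) * (t - b)) / t) b y) b x).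
  - apply (loc_ex _ b (x + 1) (b/2) x); try lra.
    intros t Ht. cont. lra.
  - cont. lra.
Qed.

Lemma RHS_deriv (a b x : R) : 0 < a -> a < b -> b < x ->
  is_derive (RHS a b) x (- (x - sqrt (a * b) - sqrt ((x - a) * (x - b))) / (2 * x)).
Proof.
  intros ha hab hbx.
  assert (H1 : is_derive (fun y => - / 2 * (y - sqrt (a * b) * ln y) + C_mu a b) x
                 (- / 2 * (1 - sqrt (a * b) / x))).
  { auto_derive. lra. field. lra. }
  pose proof (is_derive_plus _ _ x _ _ H1
     (is_derive_scal _ x (/2) _ (J_deriv a b x ha hab hbx))) as H.
  replace (- (x - sqrt (a * b) - sqrt ((x - a) * (x - b))) / (2 * x)) with
    (plus (- / 2 * (1 - sqrt (a * b) / x)) (scal (/2) (sqrt ((x - a) * (x - b)) / x))).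
  { exact H. }
  unfold plus, scal; simpl; unfold mult; simpl. field. lra.
Qed.

Lemma D_const (a b x y : R) : 0 < a -> a < b -> b < y -> y <= x ->
  U_mu a b x - RHS a b x = U_mu a b y - RHS a b y.
Proof.
  intros ha hab hby hyx.
  assert (HD : forall z, b < z -> is_derive (fun z => U_mu a b z - RHS a b z) z 0).
  { intros z Hz.
    pose proof (is_derive_minus _ _ z _ _ (U_deriv a b z ha hab Hz) (RHS_deriv a b z ha hab Hz)) as H.
    replace 0 with (minus (- (z - sqrt (a * b) - sqrt ((z - a) * (z - b))) / (2 * z))
                          (- (z - sqrt (a * b) - sqrt ((z - a) * (z - b))) / (2 * z))).
    exact H. unfold minus, plus, opp; simpl. ring. }
  destruct (MVT_gen (fun z => U_mu a b z - RHS a b z) y x (fun _ => 0)) as [c [_ Hc]].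
  - intros z Hz. apply HD. rewrite Rmin_left in Hz by lra. lra.
  - intros z Hz. apply continuity_pt_filterlim. apply (ex_derive_continuous (K:=R_AbsRing) (V:=R_NormedModule) (fun z => U_mu a b z - RHS a b z) z).
    eexists. apply HD. rewrite Rmin_left in Hz by lra. lra.
  - lra.
Qed.

Lemma ln_le_sub1 (y : R) : 0 < y -> ln y <= y - 1.
Proof.
  intros Hy. pose proof (exp_ineq1_le (y - 1)).
  rewrite <- (ln_exp (y - 1)). apply ln_le; auto. lra.
Qed.

Lemma lim_bound (f : R -> R) (B C : R) :
  (forall x, B < x -> Rabs (f x) <= C / (x - B)) -> is_lim f p_infty 0.
Proof.
  intros H. apply is_lim_spec. intros eps. simpl.
  exists (B + Rabs C / eps + 1). intros x Hx.
  pose proof (cond_pos eps). pose proof (Rabs_pos C).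
  assert (H00 : 0 <= Rabs C / eps) by (apply Rmult_le_pos; [auto|left; apply Rinv_0_lt_compat; auto]).
  rewrite Rminus_0_r. eapply Rle_lt_trans. apply H. lra.
  assert (Hxb : 0 < x - B) by lra.
  apply (Rle_lt_trans _ (Rabs C / (x - B))).
  - unfold Rdiv. apply Rmult_le_compat_r. left; apply Rinv_0_lt_compat; auto. apply Rle_abs.
  - apply (Rmult_lt_reg_r (x - B)); auto. unfold Rdiv. rewrite Rmult_assoc, Rinv_l by lra.
    rewrite Rmult_1_r.
    assert (Rabs C < eps * (x - B)).
    { assert (Rabs C = eps * (Rabs C / eps)) by (field; lra). nra. }
    lra.
Qed.

Lemma dens_bound (a b t : R) : 0 < a -> a < b -> a <= t <= b ->
  0 <= mu_density a b t <= (b - a) / (2 * PI * a).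
Proof.
  intros ha hab Ht. pose proof pi_pos'. unfold mu_density.
  assert (Hs : sqrt ((t - a) * (b - t)) <= b - a).
  { rewrite <- (sqrt_pow2 (b - a)) by lra. apply sqrt_le_1_alt. nra. }
  pose proof (sqrt_pos ((t - a) * (b - t))).
  split.
  - apply Rmult_le_pos. left; apply Rinv_0_lt_compat; lra. apply Rdiv_le_0_compat; lra.
  - replace ((b - a) / (2 * PI * a)) with (/ (2 * PI) * ((b - a) / a)) by (field; lra).
    apply Rmult_le_compat_l. left; apply Rinv_0_lt_compat; lra.
    unfold Rdiv. apply (Rle_trans _ ((b - a) * / t)).
    + apply Rmult_le_compat_r; auto. left; apply Rinv_0_lt_compat; lra.
    + apply Rmult_le_compat_l. lra. apply Rinv_le_contravar; lra.
Qed.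

Lemma U_lim (a b : R) : 0 < a -> a < b ->
  is_lim (fun x => U_mu a b x + / 4 * (sqrt b - sqrt a) ^ 2 * ln x) p_infty 0.
Proof.
  intros ha hab. pose proof pi_pos'.
  apply (lim_bound _ b ((b - a) * ((b - a) / (2 * PI * a)) * b)).
  intros x Hx.
  rewrite <- (mass a b ha hab). unfold U_mu.
  assert (Hex : ex_RInt (mu_density a b) a b).
  { apply (ex_RInt_continuous (V:=R_CompleteNormedModule)). intros t Ht.
    rewrite Rmin_left in Ht by lra. rewrite Rmax_right in Ht by lra. apply cont_mu. lra. }
  assert (Hex2 : ex_RInt (fun t => ln (/ Rabs (x - t)) * mu_density a b t) a b).
  { apply (ex_RInt_continuous (V:=R_CompleteNormedModule)). intros t Ht.
    rewrite Rmin_left in Ht by lra. rewrite Rmax_right in Ht by lra.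
    apply (cR_mult (fun t => ln (/ Rabs (x - t))) (mu_density a b)).
    + cont; rewrite Rabs_pos_eq by lra; try lra. apply Rinv_0_lt_compat; lra.
    + apply cont_mu. lra. }
  rewrite Rmult_comm, <- (RInt_scal (V:=R_CompleteNormedModule)) by auto.
  rewrite <- (RInt_plus (V:=R_CompleteNormedModule)).
  2: exact Hex2.
  2: { apply (ex_RInt_scal (V:=R_CompleteNormedModule)). auto. }
  replace ((b - a) * ((b - a) / (2 * PI * a)) * b / (x - b)) with
     ((b - a) * ((b - a) / (2 * PI * a) * (b / (x - b)))) by (field; lra).
  apply abs_RInt_le_const. lra.
  { apply (ex_RInt_plus (V:=R_CompleteNormedModule)); auto.
    apply (ex_RInt_scal (V:=R_CompleteNormedModule)); auto. }
  intros t Ht. unfold plus, scal; simpl; unfold mult; simpl.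
  destruct (dens_bound a b t ha hab Ht) as [Hd1 Hd2].
  rewrite (Rabs_pos_eq (x - t)) by lra.
  replace (ln (/ (x - t)) * mu_density a b t + ln x * mu_density a b t)
    with (ln (x / (x - t)) * mu_density a b t).
  2:{ unfold Rdiv. rewrite ln_mult. ring. lra. apply Rinv_0_lt_compat; lra. }
  assert (L1 : 0 <= ln (x / (x - t))).
  { rewrite <- ln_1. apply ln_le. lra. apply (Rmult_le_reg_r (x - t)). lra.
    field_simplify; lra. }
  assert (L2 : ln (x / (x - t)) <= b / (x - b)).
  { eapply Rle_trans. apply ln_le. apply Rdiv_lt_0_compat; lra.
    apply (Rmult_le_reg_r (x - t)). lra. unfold Rdiv. rewrite (Rmult_assoc x), Rinv_l by lra.
    instantiate (1 := x / (x - b)). 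
    apply (Rmult_le_reg_r (x - b)). lra. unfold Rdiv.
    replace (x * / (x - b) * (x - t) * (x - b)) with (x * (x - t)) by (field; lra). nra.
    eapply Rle_trans. apply ln_le_sub1. apply Rdiv_lt_0_compat; lra.
    right. field. lra. }
  rewrite Rabs_pos_eq by (apply Rmult_le_pos; lra).
  rewrite Rmult_comm. apply Rmult_le_compat; auto.
Qed.

Definition rho (a b y : R) := sqrt ((1 - a * y) * (1 - b * y)).
Definition Phi (a b y : R) : R :=
  C_mu a b - Fprim a b b / 2
  + / 2 * ((a * b * y - (a + b)) / (rho a b y + 1)
           - (a + b) / 2 * ln (1 - (a + b) / 2 * y + rho a b y)
           - sqrt (a * b) * ln ((a + b) / 2 - a * b * y - sqrt (a * b) * rho a b y)).

Lemma p_lt_c (a b : R) : 0 < a -> a < b -> sqrt (a * b) < (a + b) / 2.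
Proof.
  intros ha hab. destruct (sqrt_facts a b ha hab) as (Hs & HsS & Ea & Eb).
  rewrite sqrt_mult by lra. nra.
Qed.

Lemma Phi0 (a b : R) : 0 < a -> a < b -> Phi a b 0 = 0.
Proof.
  intros ha hab. pose proof (p_lt_c a b ha hab) as Hpc.
  unfold Phi, rho, Fprim, C_mu.
  replace ((1 - a * 0) * (1 - b * 0)) with 1 by ring. rewrite sqrt_1.
  replace ((b - a) * (b - b)) with 0 by ring. rewrite sqrt_0.
  replace (a * b * 0) with 0 by ring.
  replace (1 - (a + b) / 2 * 0 + 1) with 2 by ring.
  replace (b - (a + b) / 2 + 0) with ((b - a) / 2) by field.
  replace (((a + b) / 2 * b - a * b - sqrt (a * b) * 0) / b) with ((b - a) / 2) by (field; lra).
  replace ((a + b) / 2 - 0 - sqrt (a * b) * 1) with ((a + b) / 2 - sqrt (a * b)) by ring.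
  replace ((b - a) / 4) with (((b - a) / 2) / 2) by field.
  rewrite ln_div by lra.
  destruct (sqrt_facts a b ha hab) as (Hs & HsS & Ea & Eb).
  assert (Hq : (sqrt b + sqrt a) / (sqrt b - sqrt a) = ((b - a) / 2) / ((a + b) / 2 - sqrt (a * b))).
  { rewrite sqrt_mult by lra. set (s := sqrt a) in *. set (S := sqrt b) in *. clearbody s S.
    rewrite <- Ea, <- Eb. field. split. nra. lra. }
  rewrite Hq. rewrite (ln_div ((b - a) / 2) ((a + b) / 2 - sqrt (a * b))) by lra.
  match goal with |- ?x = ?y => change (@eq R x y) end. field.
Qed.

Lemma Phi_cont (a b : R) : 0 < a -> a < b -> continuity_pt (Phi a b) 0.
Proof.
  intros ha hab. pose proof (p_lt_c a b ha hab) as Hpc.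
  apply continuity_pt_filterlim. change (continuous (Phi a b) 0).
  unfold Phi, rho. cont.
  all: replace ((1 - a * 0) * (1 - b * 0)) with 1 by ring; rewrite ?sqrt_1; try lra.
Qed.

Lemma RHS_Phi (a b x : R) : 0 < a -> a < b -> b < x ->
  RHS a b x + / 4 * (sqrt b - sqrt a) ^ 2 * ln x = Phi a b (/ x).
Proof.
  intros ha hab hbx.
  unfold RHS. rewrite J_closed by lra.
  pose proof (p_lt_c a b ha hab) as Hpc.
  assert (Hm : / 4 * (sqrt b - sqrt a) ^ 2 = ((a + b) / 2 - sqrt (a * b)) / 2).
  { destruct (sqrt_facts a b ha hab) as (Hs & HsS & Ea & Eb). rewrite sqrt_mult by lra.
    set (s := sqrt a) in *. set (S := sqrt b) in *. clearbody s S. rewrite <- Ea, <- Eb. field. }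
  rewrite Hm.
  assert (Hr : 0 <= (1 - a * / x) * (1 - b * / x)).
  { apply Rmult_le_pos; apply (Rmult_le_reg_r x); try lra; field_simplify; lra. }
  assert (Hsq : sqrt ((x - a) * (x - b)) = x * rho a b (/ x)).
  { unfold rho. transitivity (sqrt (x ^ 2 * ((1 - a * / x) * (1 - b * / x)))).
    - f_equal. field. lra.
    - rewrite sqrt_mult; auto. rewrite sqrt_pow2; lra. apply pow2_ge_0. }
  assert (Er : rho a b (/ x) * rho a b (/ x) = (1 - a * / x) * (1 - b * / x)) by (apply sqrt_sqrt; auto).
  assert (Hr0 : 0 <= rho a b (/ x)) by apply sqrt_pos.
  unfold Fprim at 1. rewrite Hsq.
  replace (x - (a + b) / 2 + x * rho a b (/ x)) with (x * (1 - (a + b) / 2 * / x + rho a b (/ x))) by (field; lra).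
  replace (((a + b) / 2 * x - a * b - sqrt (a * b) * (x * rho a b (/ x))) / x) with
     ((a + b) / 2 - a * b * / x - sqrt (a * b) * rho a b (/ x)) by (field; lra).
  rewrite ln_mult.
  2: lra.
  2:{ assert (0 < 1 - (a + b) / 2 * / x) by (apply (Rmult_lt_reg_r x); try lra; field_simplify; lra). lra. }
  unfold Phi.
  set (r := rho a b (/ x)) in *. clearbody r.
  assert (Hxr : x * r - x = (a * b * / x - (a + b)) / (r + 1)).
  { apply (Rmult_eq_reg_r (r + 1)); [| lra].
    replace ((a * b * / x - (a + b)) / (r + 1) * (r + 1)) with (a * b * / x - (a + b)) by (field; lra).
    replace ((x * r - x) * (r + 1)) with (x * (r * r) - x) by ring. rewrite Er. field. lra. }
  rewrite <- Hxr.
  match goal with |- ?x = ?y => change (@eq R x y) end. field.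
Qed.

Lemma RHS_lim (a b : R) : 0 < a -> a < b ->
  is_lim (fun x => RHS a b x + / 4 * (sqrt b - sqrt a) ^ 2 * ln x) p_infty 0.
Proof.
  intros ha hab.
  apply (is_lim_ext_loc (fun x => Phi a b (/ x))).
  { exists b. intros x Hx. symmetry. apply RHS_Phi; lra. }
  rewrite <- (Phi0 a b ha hab).
  apply (is_lim_comp (Phi a b) Rinv p_infty (Phi a b 0) 0).
  - apply is_lim_continuity. apply Phi_cont; auto.
  - replace (Finite 0) with (Rbar_inv p_infty) by reflexivity.
    apply (is_lim_inv (fun y => y) p_infty p_infty). apply is_lim_id. discriminate.
  - exists 0. intros x Hx HH. injection HH. apply Rinv_neq_0_compat. lra.
Qed.

Lemma dens_out (a b t : R) : a < b -> b <= t -> mu_density a b t = 0.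
Proof.
  intros hab ht. unfold mu_density. rewrite sqrt_neg_0 by nra. unfold Rdiv. ring.
Qed.

Lemma dens_sqrt (a b t : R) : 0 < a -> a < b -> a <= t <= b ->
  mu_density a b t <= sqrt (b - a) / (2 * PI * a) * sqrt (b - t).
Proof.
  intros ha hab Ht. pose proof pi_pos'. unfold mu_density.
  rewrite sqrt_mult by lra.
  assert (sqrt (t - a) <= sqrt (b - a)) by (apply sqrt_le_1_alt; lra).
  pose proof (sqrt_pos (t - a)). pose proof (sqrt_pos (b - t)).
  replace (sqrt (b - a) / (2 * PI * a) * sqrt (b - t)) with
    (/ (2 * PI) * (sqrt (b - a) * sqrt (b - t) / a)) by (field; lra).
  apply Rmult_le_compat_l. left; apply Rinv_0_lt_compat; lra.
  unfold Rdiv. apply Rmult_le_compat; try nra.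
  left; apply Rinv_0_lt_compat; lra. apply Rinv_le_contravar; lra.
Qed.

Lemma ln_sq (u : R) : 0 < u -> ln (/ u) * sqrt u <= 4 * sqrt (sqrt u).
Proof.
  intros Hu.
  assert (Hs : 0 < sqrt u) by (apply sqrt_lt_R0; auto).
  assert (Hv : 0 < sqrt (sqrt u)) by (apply sqrt_lt_R0; auto).
  assert (Ev : sqrt (sqrt u) * sqrt (sqrt u) = sqrt u) by (apply sqrt_sqrt; lra).
  assert (Eu : sqrt u * sqrt u = u) by (apply sqrt_sqrt; lra).
  set (v := sqrt (sqrt u)) in *. set (s := sqrt u) in *. clearbody v s. subst u s.
  assert (HL : ln (/ (v * v * (v * v))) = 4 * ln (/ v)).
  { rewrite !ln_Rinv by (try apply Rmult_lt_0_compat; nra).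
    rewrite !ln_mult by nra. ring. }
  rewrite HL.
  pose proof (ln_le_sub1 (/ v) (Rinv_0_lt_compat v Hv)).
  assert (4 * ln (/ v) * (v * v) <= 4 * (/ v - 1) * (v * v)) by (apply Rmult_le_compat_r; nra).
  replace (4 * (/ v - 1) * (v * v)) with (4 * v - 4 * (v * v)) in H0 by (field; lra).
  nra.
Qed.

Lemma ln1p_sqrt (z : R) : 0 <= z -> ln (1 + z) <= 2 * sqrt z.
Proof.
  intros Hz. pose proof (sqrt_pos z). assert (E : sqrt z * sqrt z = z) by (apply sqrt_sqrt; auto).
  apply (Rle_trans _ (ln ((1 + sqrt z) * (1 + sqrt z)))).
  - apply ln_le; nra.
  - rewrite ln_mult by lra. pose proof (ln_le_sub1 (1 + sqrt z)). lra.
Qed.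

Lemma gb_cont_b (a b : R) : 0 < a -> a < b ->
  continuous (fun t => ln (/ Rabs (b - t)) * mu_density a b t) b.
Proof.
  intros ha hab. pose proof pi_pos'.
  set (K := sqrt (b - a) / (2 * PI * a)).
  assert (HK : 0 <= K).
  { unfold K. apply Rdiv_le_0_compat. apply sqrt_pos. nra. }
  apply (filterlim_locally (F:=locally b)). intros eps.
  set (w := eps / (4 * K + 1)).
  assert (Hw : 0 < w) by (unfold w; apply Rdiv_lt_0_compat; [apply cond_pos | lra]).
  assert (Hw' : 4 * K * w < eps).
  { unfold w. pose proof (cond_pos eps).
    apply (Rmult_lt_reg_r (4 * K + 1)); [lra|].
    replace (4 * K * (eps / (4 * K + 1)) * (4 * K + 1)) with (4 * K * eps) by (field; lra). nra. }
  assert (Hd : 0 < Rmin 1 (Rmin (b - a) (w ^ 4))).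
  { repeat apply Rmin_glb_lt; try lra. apply pow_lt; auto. }
  exists (mkposreal _ Hd). intros t Ht. apply ball_R in Ht.
  change (pos (mkposreal _ Hd)) with (Rmin 1 (Rmin (b - a) (w ^ 4))) in Ht.
  pose proof (Rmin_l 1 (Rmin (b - a) (w ^ 4))). pose proof (Rmin_r 1 (Rmin (b - a) (w ^ 4))).
  pose proof (Rmin_l (b - a) (w ^ 4)). pose proof (Rmin_r (b - a) (w ^ 4)).
  change (Rabs (ln (/ Rabs (b - t)) * mu_density a b t - ln (/ Rabs (b - b)) * mu_density a b b) < eps).
  rewrite (dens_out a b b) by lra. rewrite Rmult_0_r, Rminus_0_r.
  destruct (Rle_dec b t) as [Hbt|Hbt].
  { rewrite (dens_out a b t) by lra. rewrite Rmult_0_r, Rabs_R0. apply cond_pos. }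
  apply Rnot_le_lt in Hbt.
  set (u := b - t). assert (Hu : 0 < u < 1) by (unfold u; lra).
  assert (Hu4 : u < w ^ 4) by (unfold u; lra).
  rewrite (Rabs_pos_eq u) by lra.
  pose proof (dens_sqrt a b t ha hab ltac:(lra)) as Hds. fold K in Hds. fold u in Hds.
  assert (Hdpos : 0 <= mu_density a b t) by (apply dens_bound; lra).
  assert (Hln : 0 <= ln (/ u)).
  { rewrite <- ln_1. apply ln_le. lra. rewrite <- Rinv_1. apply Rinv_le_contravar; lra. }
  rewrite Rabs_pos_eq by (apply Rmult_le_pos; auto).
  pose proof (ln_sq u (proj1 Hu)) as Hsq.
  assert (Hv : sqrt (sqrt u) < w).
  { assert (Hv0 : 0 <= sqrt (sqrt u)) by apply sqrt_pos.
    assert (Ev : sqrt (sqrt u) ^ 4 = u).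
    { replace (sqrt (sqrt u) ^ 4) with ((sqrt (sqrt u) * sqrt (sqrt u)) * (sqrt (sqrt u) * sqrt (sqrt u))) by ring.
      rewrite sqrt_sqrt by (apply sqrt_pos). apply sqrt_sqrt; lra. }
    destruct (Rlt_le_dec (sqrt (sqrt u)) w) as [|Hge]; auto.
    assert (w ^ 4 <= sqrt (sqrt u) ^ 4) by (apply pow_incr; lra). lra. }
  apply (Rle_lt_trans _ (ln (/ u) * (K * sqrt u))).
  - apply Rmult_le_compat_l; auto.
  - apply (Rle_lt_trans _ (K * (4 * sqrt (sqrt u)))).
    + replace (ln (/ u) * (K * sqrt u)) with (K * (ln (/ u) * sqrt u)) by ring.
      apply Rmult_le_compat_l; auto.
    + nra.
Qed.

Lemma gy_ex (a b y : R) : 0 < a -> a < b -> b < y ->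
  ex_RInt (fun t => ln (/ Rabs (y - t)) * mu_density a b t) a b.
Proof.
  intros ha hab hy.
  apply (ex_RInt_continuous (V:=R_CompleteNormedModule)). intros t Ht.
  rewrite Rmin_left in Ht by lra. rewrite Rmax_right in Ht by lra.
  apply (cR_mult (fun t => ln (/ Rabs (y - t))) (mu_density a b)).
  + cont; rewrite Rabs_pos_eq by lra; try lra. apply Rinv_0_lt_compat; lra.
  + apply cont_mu. lra.
Qed.

Lemma gb_ex (a b : R) : 0 < a -> a < b ->
  ex_RInt (fun t => ln (/ Rabs (b - t)) * mu_density a b t) a b.
Proof.
  intros ha hab.
  apply (ex_RInt_continuous (V:=R_CompleteNormedModule)). intros t Ht.
  rewrite Rmin_left in Ht by lra. rewrite Rmax_right in Ht by lra.
  destruct (Req_dec t b) as [->|Hne].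
  - apply gb_cont_b; auto.
  - apply (cR_mult (fun t => ln (/ Rabs (b - t))) (mu_density a b)).
    + cont; rewrite Rabs_pos_eq by lra; try lra. apply Rinv_0_lt_compat; lra.
    + apply cont_mu. lra.
Qed.

Lemma U_right (a b : R) : 0 < a -> a < b -> forall eps, 0 < eps ->
  exists del, 0 < del /\ forall y, b < y < b + del -> Rabs (U_mu a b y - U_mu a b b) < eps.
Proof.
  intros ha hab eps Heps. pose proof pi_pos'.
  set (K := sqrt (b - a) / (2 * PI * a)).
  assert (HK : 0 <= K).
  { unfold K. apply Rdiv_le_0_compat. apply sqrt_pos. nra. }
  set (C2 := (b - a) * (2 * K)).
  assert (HC2 : 0 <= C2) by (unfold C2; nra).
  set (w := eps / (C2 + 1)).
  assert (Hw : 0 < w) by (unfold w; apply Rdiv_lt_0_compat; lra).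
  exists (w ^ 2). split. apply pow_lt; auto.
  intros y Hy.
  unfold U_mu.
  rewrite <- (RInt_minus (V:=R_CompleteNormedModule)) by (first [apply gb_ex; lra | apply gy_ex; lra]).
  apply (Rle_lt_trans _ ((b - a) * (2 * K * sqrt (y - b)))).
  - apply abs_RInt_le_const. lra.
    { apply (ex_RInt_minus (V:=R_CompleteNormedModule)). apply gy_ex; lra. apply gb_ex; lra. }
    intros t Ht. unfold minus, plus, opp; simpl.
    destruct (Req_dec t b) as [->|Hne].
    { rewrite (dens_out a b b) by lra. rewrite !Rmult_0_r, Ropp_0, Rplus_0_r, Rabs_R0.
      apply Rmult_le_pos. lra. apply sqrt_pos. }
    set (u := b - t). set (h := y - b).
    assert (Hu : 0 < u) by (unfold u; lra). assert (Hh : 0 < h) by (unfold h; lra).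
    replace (y - t) with (u + h) by (unfold u, h; ring).
    rewrite (Rabs_pos_eq u), (Rabs_pos_eq (u + h)) by lra.
    assert (Hdpos : 0 <= mu_density a b t) by (apply dens_bound; lra).
    pose proof (dens_sqrt a b t ha hab ltac:(lra)) as Hds. fold K in Hds. fold u in Hds.
    replace (ln (/ (u + h)) * mu_density a b t + - (ln (/ u) * mu_density a b t))
      with (- (ln (1 + h / u) * mu_density a b t)).
    2:{ rewrite !ln_Rinv by lra.
        replace (1 + h / u) with ((u + h) / u) by (field; lra).
        rewrite ln_div by lra. ring. }
    rewrite Rabs_Ropp.
    assert (Hl0 : 0 <= ln (1 + h / u)).
    { rewrite <- ln_1. apply ln_le. lra. assert (0 <= h / u) by (apply Rdiv_le_0_compat; lra). lra. }
    rewrite Rabs_pos_eq by (apply Rmult_le_pos; auto).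
    pose proof (ln1p_sqrt (h / u) ltac:(apply Rdiv_le_0_compat; lra)) as Hl.
    assert (Esq : sqrt (h / u) * sqrt u = sqrt h).
    { rewrite <- sqrt_mult. f_equal. field. lra. apply Rdiv_le_0_compat; lra. lra. }
    apply (Rle_trans _ (2 * sqrt (h / u) * (K * sqrt u))).
    + apply Rmult_le_compat; auto.
    + replace (2 * sqrt (h / u) * (K * sqrt u)) with (2 * K * (sqrt (h / u) * sqrt u)) by ring.
      rewrite Esq. lra.
  - assert (Hs : sqrt (y - b) < w).
    { rewrite <- (sqrt_pow2 w) by lra. apply sqrt_lt_1_alt. lra. }
    pose proof (sqrt_pos (y - b)).
    replace ((b - a) * (2 * K * sqrt (y - b))) with (C2 * sqrt (y - b)) by (unfold C2; ring).
    assert (C2 * w < eps).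
    { unfold w. apply (Rmult_lt_reg_r (C2 + 1)); [lra|].
      replace (C2 * (eps / (C2 + 1)) * (C2 + 1)) with (C2 * eps) by (field; lra). nra. }
    nra.
Qed.

Lemma RHS_right (a b : R) : 0 < a -> a < b -> forall eps, 0 < eps ->
  exists del, 0 < del /\ forall y, b < y < b + del -> Rabs (RHS a b y - RHS a b b) < eps.
Proof.
  intros ha hab eps Heps.
  assert (Hc : continuous (RHS a b) b).
  { unfold RHS. apply cR_plus; [cont; lra|].
    apply cR_mult; [apply cR_const|].
    apply (continuous_RInt_1 (fun t => sqrt ((t - a) * (t - b)) / t) b b).
    apply (loc_ex _ b (b + 1) (b/2) b); try lra.
    intros t Ht. cont. lra. }
  destruct (proj1 (filterlim_locally (F:=locally b) (RHS a b) (RHS a b b)) Hc (mkposreal _ Heps)) as [d Hd].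
  exists d. split. apply cond_pos. intros y Hy.
  apply (Hd y). change (Rabs (y - b) < d). rewrite Rabs_pos_eq; lra.
Qed.

Lemma zero_of_small (z : R) : (forall eps, 0 < eps -> Rabs z < eps) -> z = 0.
Proof.
  intros H. destruct (Req_dec z 0) as [|Hz]; auto.
  exfalso. specialize (H (Rabs z) (Rabs_pos_lt z Hz)). lra.
Qed.

Theorem lemma4p4 (a b : R) (ha : 0 < a) (hab : a < b) :
  RInt (mu_density a b) a b = / 4 * (sqrt b - sqrt a) ^ 2
  /\ is_lim (fun x => U_mu a b x + / 4 * (sqrt b - sqrt a) ^ 2 * ln x)
            p_infty 0
  /\ (forall x : R, b <= x ->
        U_mu a b x = - / 2 * (x - sqrt (a * b) * ln x) + C_mu a b
                     + / 2 * RInt (fun t => sqrt ((t - a) * (t - b)) / t) b x).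
Proof.
  split; [apply mass; auto|].
  split; [apply U_lim; auto|].
  set (K := U_mu a b (b + 1) - RHS a b (b + 1)).
  assert (HK : forall x, b < x -> U_mu a b x - RHS a b x = K).
  { intros x Hx. unfold K. destruct (Rle_dec (b + 1) x).
    - apply D_const; auto; lra.
    - symmetry. apply D_const; auto; lra. }
  assert (K0 : K = 0).
  { apply zero_of_small. intros eps Heps.
    assert (He2 : 0 < eps / 2) by lra.
    pose proof (proj2 (is_lim_spec _ _ _) (U_lim a b ha hab) (mkposreal _ He2)) as [M1 HM1].
    pose proof (proj2 (is_lim_spec _ _ _) (RHS_lim a b ha hab) (mkposreal _ He2)) as [M2 HM2].
    set (x := Rmax (Rmax M1 M2) b + 1).
    pose proof (Rmax_l (Rmax M1 M2) b). pose proof (Rmax_r (Rmax M1 M2) b).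
    pose proof (Rmax_l M1 M2). pose proof (Rmax_r M1 M2).
    specialize (HM1 x ltac:(unfold x; lra)). specialize (HM2 x ltac:(unfold x; lra)).
    change (pos (mkposreal _ He2)) with (eps / 2) in HM1, HM2. rewrite Rminus_0_r in HM1, HM2.
    rewrite <- (HK x ltac:(unfold x; lra)).
    replace (U_mu a b x - RHS a b x) with
      ((U_mu a b x + / 4 * (sqrt b - sqrt a) ^ 2 * ln x) - (RHS a b x + / 4 * (sqrt b - sqrt a) ^ 2 * ln x)) by ring.
    eapply Rle_lt_trans. apply Rabs_triang. rewrite Rabs_Ropp. lra. }
  intros x Hx. change (U_mu a b x = RHS a b x).
  destruct (Req_dec x b) as [->|Hne].
  - apply Rminus_diag_uniq. apply zero_of_small. intros eps Heps.
    assert (He2 : 0 < eps / 2) by lra.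
    destruct (U_right a b ha hab _ He2) as [d1 [Hd1 H1]].
    destruct (RHS_right a b ha hab _ He2) as [d2 [Hd2 H2]].
    set (y := b + Rmin d1 d2 / 2).
    pose proof (Rmin_l d1 d2). pose proof (Rmin_r d1 d2).
    assert (Hm : 0 < Rmin d1 d2) by (apply Rmin_glb_lt; auto).
    specialize (H1 y ltac:(unfold y; lra)). specialize (H2 y ltac:(unfold y; lra)).
    pose proof (HK y ltac:(unfold y; lra)) as Hy. rewrite K0 in Hy.
    replace (U_mu a b b - RHS a b b) with
      (- (U_mu a b y - U_mu a b b) + (RHS a b y - RHS a b b) + (U_mu a b y - RHS a b y)) by ring.
    rewrite Hy, Rplus_0_r.
    eapply Rle_lt_trans. apply Rabs_triang. rewrite Rabs_Ropp. lra.
  - pose proof (HK x ltac:(lra)). lra.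
Qed.
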